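(* Let $G$ be the $n\times n$ real matrix with entries $G_{ij}=\frac1p\,\sigma^{\,i+j}(x)$ for $0\le i,j\le n-1$ (exponents of $\sigma$ may be read modulo $n$, since $\sigma^n(x)=x$). Then $G$ is orthogonal: $GG^T=G^TG=I_n$.
   Context: Let $n>1$ be an odd integer and $p$ a prime with $p\equiv 1 \pmod n$. Let $\zeta_p=e^{2\pi i/p}$, let $r$ be a primitive root modulo $p$, and let $\sigma$ be the automorphism of $\mathbb{Q}(\zeta_p)$ with $\sigma(\zeta_p)=\zeta_p^r$. Let $\mathbb{K}=\{y\in\mathbb{Q}(\zeta_p):\sigma^n(y)=y\}$; it is a totally real field of degree $n$, contained in $\mathbb{R}$ via $\mathbb{Q}(\zeta_p)\subset\mathbb{C}$, and its embeddings into $\mathbb{R}$ are the restrictions of $\sigma^0,\dots,\sigma^{n-1}$. Let $\alpha=\prod_{j=0}^{(p-3)/2}(1-\zeta_p^{r^j})$, let $\lambda$ be an integer with $\lambda(r-1)\equiv1\pmod p$, let $z=\zeta_p^{\lambda}\alpha(1-\zeta_p)$, and let $x=\mathrm{Tr}_{\mathbb{Q}(\zeta_p)/\mathbb{K}}(z)=\sum_{j=1}^{(p-1)/n}\sigma^{jn}(z)\in\mathcal{O}_\mathbb{K}$. *)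

(* Defs.v *)
From HB Require Import structures.
From mathcomp Require Import all_boot all_order all_algebra all_field.
Set Implicit Arguments. Unset Strict Implicit. Unset Printing Implicit Defensive.
Import Order.TTheory GRing.Theory Num.Theory.
Local Open Scope ring_scope.

(* zeta_p = e^{2 pi i / p}.  In algC, p.-root (-1) is the p-th root of -1
   with minimal nonnegative argument, i.e. e^{i pi / p}; its square is
   e^{2 pi i / p}. *)
Definition zeta (p : nat) : algC := (p.-root (-1)) ^+ 2.

Definition alpha (p : nat) (r : int) : algC :=
  \prod_(0 <= j < ((p - 3)./2).+1) (1 - zeta p ^ (r ^+ j)).

Definition zz (p : nat) (r lam : int) : algC :=
  zeta p ^ lam * alpha p r * (1 - zeta p).

(* x = Tr_{Q(zeta)/K}(z) = sum_{j=1}^{(p-1)/n} sigma^{jn}(z) *)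
Definition xx (n p : nat) (r lam : int) (sigma : algC -> algC) : algC :=
  \sum_(1 <= j < ((p - 1) %/ n).+1) iter (j * n) sigma (zz p r lam).

Definition Gmat (n p : nat) (r lam : int) (sigma : algC -> algC) : 'M[algC]_n :=
  \matrix_(i < n, j < n) (iter (i + j) sigma (xx n p r lam sigma) / p%:R).

(* Main.v *)
Require Import Defs.
From HB Require Import structures.
From mathcomp Require Import all_boot all_order all_algebra all_field.
From mathcomp Require Import zify ring.
Import Order.TTheory GRing.Theory Num.Theory.
Local Open Scope ring_scope.

Module A.

Section Zeta.
Variable p : nat.
Hypothesis p_pr : prime p.
Hypothesis p_gt2 : (2 < p)%N.

Local Notation z := (zeta p).

Lemma zeta_prim : p.-primitive_root z.
Proof.
have p_gt1 : (1 < p)%N by apply: prime_gt1.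
have p_gt0 : (0 < p)%N by apply: prime_gt0.
set y := p.-root (-1 : algC).
have yp : y ^+ p = -1 by rewrite /y rootCK.
have zp : z ^+ p = 1 by rewrite /zeta -exprM mulnC exprM yp sqrrN expr1n.
have [m mz mp] := prim_order_exists p_gt0 zp.
have : m \in [:: 1%N; p].
  by rewrite !inE; case/primeP: p_pr => _ /(_ m mp).
rewrite !inE => /orP [/eqP m1|/eqP mE]; last by move: mz; rewrite mE.
exfalso; move: (prim_expr_order mz); rewrite m1 expr1.
rewrite /zeta -/y => /eqP; rewrite sqrf_eq1 => /orP [/eqP y1| /eqP yN1].
  by move: yp; rewrite y1 expr1n => /eqP; rewrite -subr_eq0 opprK -[1 + 1 : algC]/(2%:R) pnatr_eq0.

have := rootC_lt0 (-1 : algC) p_gt1; rewrite -/y yN1 ltrN10 //.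
Qed.


Local Notation F := ('F_p).
Definition w (t : 'F_p) : algC := z ^+ (t : nat).

Lemma w_nat k : w (k%:R) = z ^+ k.
Proof. by rewrite /w val_Fp_nat // (prim_expr_mod zeta_prim). Qed.

Lemma Fp_lt (t : 'F_p) : (t < p)%N.
Proof. have h := ltn_ord t; move: (nat_of_ord t) h; rewrite Fp_cast //. Qed.

Lemma Fp_natr (t : 'F_p) : ((t : nat)%:R : 'F_p) = t.
Proof. by apply: val_inj; rewrite /= val_Fp_nat // modn_small // Fp_lt. Qed.

Lemma wD s t : w (s + t) = w s * w t.
Proof. by rewrite -[s]Fp_natr -[t]Fp_natr -natrD !w_nat exprD. Qed.

Lemma w0 : w 0 = 1.
Proof. by rewrite /w /= expr0. Qed.

Lemma wN t : w (- t) = (w t)^-1.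
Proof.
have h : w (- t) * w t = 1 by rewrite -wD addNr w0.
have nz : w t != 0 by apply/eqP => e; move: h; rewrite e mulr0 => /eqP; rewrite eq_sym oner_eq0.
by rewrite -[w (-t)]mulr1 -(mulfV nz) mulrA h mul1r.
Qed.

Lemma w_int (a : int) : z ^ a = w (a%:~R).
Proof.
case: a => k.
  by rewrite -pmulrn w_nat.
rewrite NegzE rmorphN /= wN -pmulrn w_nat.
by [].
Qed.

Lemma w_eq1 t : w t = 1 -> t = 0.
Proof.
rewrite /w => /eqP; rewrite -(expr0 z) (eq_prim_root_expr zeta_prim) mod0n.
rewrite modn_small ?Fp_lt //.
by move/eqP => h; apply: val_inj.
Qed.

Lemma w_exp t k : w t ^+ k = w (t *+ k).
Proof. by elim: k => [|k IH]; rewrite ?expr0 ?mulr0n ?w0 // exprS IH mulrS wD. Qed.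


Lemma big_Fp {R : Type} {idx : R} {op : Monoid.law idx} (P : pred nat) (g : nat -> R) :
  \big[op/idx]_(t : 'F_p | P t) g t = \big[op/idx]_(0 <= i < p | P i) g i.
Proof.
rewrite [in RHS](_ : p = (Zp_trunc (pdiv p)).+2) ?Fp_cast // big_mkord.
by [].
Qed.


Lemma sum_z : \sum_(i < p) z ^+ i = 0.
Proof.
have zp := prim_expr_order zeta_prim.
have : (z - 1) * \sum_(i < p) z ^+ i = 0 by rewrite -subrX1 zp subrr.
move/eqP; rewrite mulf_eq0 => /orP [|/eqP //].
rewrite subr_eq0 => /eqP z1; have := @w_eq1 1%:R.
rewrite w_nat expr1 => /(_ z1) /eqP.
by rewrite oner_eq0.
Qed.

Lemma sum_w s : \sum_(t : 'F_p) w (s * t) = if s == 0 then (p%:R : algC) else 0.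
Proof.
have [->|s0] := eqVneq s 0.
  under eq_bigr do rewrite mul0r w0.
  by rewrite sumr_const card_Fp.
transitivity (\sum_(t : 'F_p) w t); first by rewrite [RHS](reindex_inj (mulfI s0)).
apply: (eq_trans (big_Fp xpredT (fun i => z ^+ i))).
rewrite big_mkord; exact: sum_z.
Qed.

Lemma prod_w : \prod_(t : 'F_p | t != 0) (1 - w t) = (p%:R : algC).
Proof.
have h := factor_Xn_sub_1 zeta_prim.
rewrite big_ltn ?prime_gt0 // expr0 subrX1 polyC1 in h.
have nz : ('X - 1 : {poly algC}) != 0 by rewrite -polyC1 polyXsubC_eq0.
have {}h := mulfI nz h.
have := congr1 (horner^~ 1) h.
rewrite horner_prod horner_sum.
under eq_bigr do rewrite hornerXsubC.
under [in RHS]eq_bigr do rewrite hornerXn expr1n.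
rewrite sumr_const card_ord => <-.
rewrite (eq_bigl (fun t : 'F_p => (t : nat) != 0%N)) //.
rewrite (big_Fp (fun i => i != 0%N) (fun i => 1 - z ^+ i)).
rewrite big_ltn_cond ?prime_gt0 //=.
by rewrite big_nat_cond [in RHS]big_nat_cond; apply: eq_bigl => i; rewrite andbC /=; case: (i < p)%N; case: i.
Qed.

End Zeta.

End A.
Import A.

Section Rho.
Variable p : nat.
Hypothesis p_pr : prime p.
Variable rho : 'F_p.
Hypothesis rho_prim : (p.-1).-primitive_root rho.

Lemma rho_inj (i j : 'I_p.-1) : rho ^+ i = rho ^+ j -> i = j.
Proof.
move/eqP; rewrite (eq_prim_root_expr rho_prim) !modn_small // => /eqP h.
exact: val_inj.
Qed.

Lemma rho_neq0 k : rho ^+ k != 0.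
Proof.
rewrite expf_neq0 //; apply/eqP => r0.
have := prim_expr_order rho_prim; rewrite r0 expr0n.
have : (p.-1 != 0)%N by rewrite -lt0n -subn1 subn_gt0 prime_gt1.
by move/negbTE => ->; move/eqP; rewrite eq_sym oner_eq0.
Qed.

Lemma big_rho {R : Type} {idx : R} {op : Monoid.com_law idx} (g : 'F_p -> R) :
  \big[op/idx]_(N < p.-1) g (rho ^+ N) = \big[op/idx]_(t : 'F_p | t != 0) g t.
Proof.
rewrite -(big_image op idx (fun N : 'I_p.-1 => rho ^+ N) xpredT g).
rewrite -big_enum /=.
apply: perm_big.
have u1 : uniq [seq rho ^+ N | N : 'I_p.-1].
  by rewrite map_inj_uniq ?enum_uniq //; exact: rho_inj.
have sub : {subset [seq rho ^+ N | N : 'I_p.-1] <= enum (fun i : 'F_p => i != 0)}.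
  move=> t /mapP [N _ ->]; rewrite mem_enum; exact: rho_neq0.
have sz : (size (enum (fun i : 'F_p => i != (0%R : 'F_p))) <= size [seq rho ^+ N | N : 'I_p.-1])%N.
  rewrite size_map -!cardE.
  have -> : #|(fun i : 'F_p => i != (0%R : 'F_p))| = #|predC1 (0%R:'F_p)| by apply: eq_card.
  by rewrite cardC1 card_Fp // card_ord.
have [_ e] := uniq_min_size u1 sub sz.
by apply: uniq_perm => //; exact: enum_uniq.
Qed.

End Rho.

Section Cyc.

Lemma shift1 (g : nat -> algC) f : (0 < f)%N -> (forall j, g (j + f)%N = g j) ->
  \sum_(0 <= j < f) g j.+1 = \sum_(0 <= j < f) g j.
Proof.
move=> f0 per.
rewrite -(big_add1 _ _ 0 f.+1 xpredT) big_nat_recr // [RHS]big_ltn //=.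
by rewrite -{2}[f]add0n per addrC.
Qed.

Lemma shiftc (g : nat -> algC) f c : (0 < f)%N -> (forall j, g (j + f)%N = g j) ->
  \sum_(0 <= j < f) g (j + c)%N = \sum_(0 <= j < f) g j.
Proof.
move=> f0 per; elim: c => [|c IH]; first by under eq_bigr do rewrite addn0.
rewrite -IH -(@shift1 (fun j => g (j + c)%N)) //.
  by apply: eq_bigr => j _; rewrite addSnnS.
by move=> j; rewrite addnAC per.
Qed.

Lemma reidx (g : nat -> algC) n f :
  \sum_(0 <= k < n) \sum_(0 <= j < f) g (k + j * n)%N = \sum_(0 <= N < n * f) g N.
Proof.
rewrite exchange_big /=.
elim: f => [|f IH]; first by rewrite muln0 !big_geq.
rewrite big_nat_recr //= IH mulnS addnC (big_cat_nat _ (leq_addr n (n * f))) //=.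
congr (_ + _).
have e := big_addn 0 (n * f + n) (n * f) xpredT g.
rewrite add0n addKn in e; rewrite e.
by apply: eq_bigr => k _; rewrite mulnC.
Qed.

End Cyc.


Section Main.
Variables (n p : nat) (r lam : int) (sigma : {rmorphism algC -> algC}).
Hypotheses (n_gt1 : (1 < n)%N) (n_odd : odd n) (p_pr : prime p)
  (p_mod : (p = 1 %[mod n])%N)
  (r_prim : (p.-1).-primitive_root (r%:~R : 'F_p))
  (lam_h : (lam * (r - 1) = 1 %[mod p])%Z)
  (sig_z : sigma (zeta p) = zeta p ^ r).

Local Notation f := ((p - 1) %/ n)%N.
Local Notation z := (zeta p).
Local Notation w := (w p).
Let wD := @A.wD p p_pr.
Let wN := @A.wN p p_pr.
Let w0 := A.w0 p.
Let w_exp := @A.w_exp p p_pr.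
Let w_nat := @A.w_nat p p_pr.
Let w_eq1 := @A.w_eq1 p p_pr.
Let Fp_natr := @A.Fp_natr p p_pr.
Let w_int := @A.w_int p p_pr.

Lemma pf : p.-1 = (n * f)%N.
Proof.
have dvd : (n %| p - 1)%N by rewrite -eqn_mod_dvd ?prime_gt0 // p_mod.
by rewrite -subn1 mulnC divnK.
Qed.

Lemma p_odd : odd p.
Proof.
have [p2|//] := even_prime p_pr.
have := pf; rewrite p2 /= => /esym /eqP; rewrite muln_eq1 => /andP [/eqP n1 _].
by move: n_gt1; rewrite n1.
Qed.

Definition hh := (f./2)%N.

Lemma fh : f = (2 * hh)%N.
Proof.
have hof : odd f = false.
  have := congr1 odd pf; rewrite oddM n_odd /= => <-.
  by rewrite -subn1 oddB ?prime_gt0 // p_odd.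
by rewrite -{1}(odd_double_half f) hof add0n -mul2n.
Qed.

Definition MM := (n * hh)%N.

Lemma pM : p.-1 = (2 * MM)%N.
Proof. by rewrite pf fh /MM mulnCA. Qed.

Lemma MM_gt0 : (0 < MM)%N.
Proof.
have := pM; have : (1 < p)%N by apply: prime_gt1.
case: MM => //; rewrite muln0; case: p => // q; lia.
Qed.

Lemma mE : (((p - 3)./2).+1 = MM)%N.
Proof.
have h1 := pM; have h2 := MM_gt0.
have -> : (p - 3 = (MM.-1).*2)%N by rewrite -mul2n; lia.
by rewrite doubleK prednK.
Qed.

Local Notation rho := (r%:~R : 'F_p).
Local Notation L := (lam%:~R : 'F_p).

Lemma intr_Fp a b : (a = b %[mod p])%Z -> (a%:~R : 'F_p) = b%:~R.
Proof.
move=> h.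
have p0 : ((p%:Z)%:~R : 'F_p) = 0.
  by apply: val_inj; rewrite /= -pmulrn val_Fp_nat // modnn.
by rewrite (divz_eq a p) (divz_eq b p) h !intrD !intrM p0 !mulr0.
Qed.

Lemma Lrho : L * (rho - 1) = 1.
Proof. by have := intr_Fp _ _ lam_h; rewrite intrM intrB. Qed.

Lemma rhoL : rho * L = L + 1.
Proof.
transitivity (L * (rho - 1) + L); first by ring.
by rewrite Lrho addrC.
Qed.

Lemma rho_M : rho ^+ MM = -1.
Proof.
have : (rho ^+ MM) ^+ 2 = 1 by rewrite -exprM mulnC -pM (prim_expr_order r_prim).
move/eqP; rewrite sqrf_eq1 => /orP [|/eqP //].
rewrite -{2}(expr0 rho) (eq_prim_root_expr r_prim) pM mod0n modn_small.
  by have := MM_gt0; case: MM.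
by have := MM_gt0; lia.
Qed.


Lemma sig_w t : sigma (w t) = w (rho * t).
Proof.
rewrite /A.w rmorphXn sig_z (w_int r) w_exp.
by rewrite -mulr_natr Fp_natr.
Qed.

Local Notation it k := (iter k sigma).

Lemma iter_w k t : it k (w t) = w (rho ^+ k * t).
Proof. by elim: k t => [|k IH] t; rewrite ?expr0 ?mul1r //= IH sig_w mulrA -exprS. Qed.

Lemma iterM k a b : it k (a * b) = it k a * it k b.
Proof. by elim: k => //= k ->; rewrite rmorphM. Qed.
Lemma iterB k a b : it k (a - b) = it k a - it k b.
Proof. by elim: k => //= k ->; rewrite rmorphB. Qed.
Lemma iterN k a : it k (- a) = - it k a.
Proof. by elim: k => //= k ->; rewrite rmorphN. Qed.
Lemma iter1 k : it k 1 = 1.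
Proof. by elim: k => //= k ->; rewrite rmorph1. Qed.
Lemma iterD k a b : it k (a + b) = it k a + it k b.
Proof. by elim: k => //= k ->; rewrite rmorphD. Qed.
Lemma iter0 k : it k 0 = 0.
Proof. by elim: k => //= k ->; rewrite rmorph0. Qed.
Lemma iter_sum k I (s : seq I) (P : pred I) (F : I -> algC) :
  it k (\sum_(i <- s | P i) F i) = \sum_(i <- s | P i) it k (F i).
Proof. exact: (big_morph _ (iterD k) (iter0 k)). Qed.

Definition al := \prod_(0 <= j < MM) (1 - w (rho ^+ j)).

Lemma alphaE : alpha p r = al.
Proof.
rewrite /alpha mE /al; apply: eq_bigr => j _.
by rewrite w_int rmorphXn.
Qed.

Lemma w1 : w 1 = z.
Proof. by have := w_nat 1; rewrite expr1. Qed.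

Lemma w1_neq1 : 1 - w 1 != 0.
Proof.
rewrite subr_eq0; apply/eqP => /esym /w_eq1 /eqP.
by rewrite oner_eq0.
Qed.

Lemma sig_al : sigma al = - w (-1) * al.
Proof.
have e : sigma al = \prod_(0 <= j < MM) (1 - w (rho ^+ j.+1)).
  rewrite rmorph_prod; apply: eq_bigr => j _.
  by rewrite rmorphB rmorph1 sig_w -exprS.
have e2 : (1 - w 1) * sigma al = al * (1 - w (-1)).
  rewrite e /al -rho_M.
  have := @big_nat_recl _ 1 *%R MM 0 (fun j => 1 - w (rho ^+ j)) (leq0n MM).
  rewrite big_nat_recr //= expr0 => <-; done.
apply: (mulfI w1_neq1); rewrite e2.
have : w (-1) * w 1 = 1 by rewrite -wD addNr w0.
move=> h; rewrite mulrA [RHS]mulrC; congr (_ * _).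
by rewrite mulrBl mul1r mulrN opprK [w 1 * _]mulrC h addrC.
Qed.

Definition be := w L * al.

Lemma sig_be : sigma be = - be.
Proof.
rewrite /be rmorphM sig_w rhoL sig_al wD.
have : w (-1) * w 1 = 1 by rewrite -wD addNr w0.
move=> h.
by rewrite mulNr mulrN -mulrA (mulrA (w 1)) [w 1 * _]mulrC h mul1r.
Qed.

Lemma iter_be k : it k be = (-1) ^+ k * be.
Proof. elim: k => [|k IH]; rewrite ?expr0 ?mul1r //= IH rmorphM sig_be rmorph_sign exprS.
by rewrite mulN1r mulNr mulrN. Qed.


Lemma fac u : (1 - w u) * (1 - w (- u)) = - w (- u) * (1 - w u) ^+ 2.
Proof.
have h : w (- u) * w u = 1 by rewrite -wD addNr w0.
rewrite (_ : (1 - w u) * (1 - w (- u)) = 1 - w u - w (- u) + w (- u) * w u); last by ring.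
rewrite (_ : - w (- u) * (1 - w u) ^+ 2 = - w (- u) + (w (- u) * w u) *+ 2 - w u * (w (- u) * w u)); last by ring.
rewrite h; ring.
Qed.

Lemma sum_rho : \sum_(0 <= j < MM) rho ^+ j = - (L *+ 2).
Proof.
have e : (rho - 1) * \sum_(0 <= j < MM) rho ^+ j = - (1 *+ 2).
  by rewrite big_mkord -subrX1 rho_M -opprD.
transitivity (L * ((rho - 1) * \sum_(0 <= j < MM) rho ^+ j)).
  by rewrite mulrA Lrho mul1r.
by rewrite e mulrN mulrnAr mulr1.
Qed.

Lemma be2 : be ^+ 2 = (-1) ^+ MM * p%:R.
Proof.
have P := prod_w p p_pr.
rewrite -(@big_rho p p_pr _ r_prim _ _ _ (fun t => 1 - w t)) in P.
rewrite -(big_mkord xpredT (fun N => 1 - w (rho ^+ N))) pM in P.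
rewrite (big_cat_nat _ (leq_pmull MM (isT : (0 < 2)%N))) //= in P.
have e := @big_addn _ 1 *%R 0 (2 * MM) MM xpredT (fun N => 1 - w (rho ^+ N)).
rewrite add0n (_ : (2 * MM - MM = MM)%N) in e; last by lia.
rewrite e -big_split /= in P.
rewrite (eq_bigr (fun i => (-1) * w (- rho ^+ i) * (1 - w (rho ^+ i)) ^+ 2)) in P; last first.
  by move=> i _; rewrite exprD rho_M mulrN1 fac mulN1r.
rewrite big_split prodrXl -/al big_split prodr_const_nat subn0 in P.
rewrite -(big_morph w wD w0) sumrN sum_rho opprK in P.
have s2 : (-1) ^+ MM * (-1) ^+ MM = 1 :> algC.
  by rewrite -exprD addnn -mul2n exprM sqrrN !expr1n.
rewrite /be exprMn w_exp -P /=.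
by rewrite !mulrA s2 mul1r.
Qed.


Lemma zzE : zz p r lam = be * (1 - w 1).
Proof. by rewrite /zz alphaE w_int w1 /be. Qed.

Lemma iter_zz k : it k (zz p r lam) = (-1) ^+ k * be * (1 - w (rho ^+ k)).
Proof. by rewrite zzE iterM iter_be iterB iter1 iter_w mulr1. Qed.

Lemma alt_sum k : \sum_(0 <= j < 2 * k) (-1) ^+ j = 0 :> algC.
Proof.
elim: k => [|k IH]; first by rewrite big_geq.
rewrite mulnS !add2n big_nat_recr // big_nat_recr //= IH add0r.
by rewrite exprS mulN1r addrN.
Qed.

Lemma sign_sum c : \sum_(1 <= j < f.+1) (-1) ^+ (c + j * n) = 0 :> algC.
Proof.
under eq_bigr => j _ do rewrite exprD -[(-1) ^+ (j * n)]signr_odd oddM n_odd andbT signr_odd.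
rewrite -mulr_sumr (big_add1 _ _ 0 f.+1 xpredT) /=.
under eq_bigr do rewrite exprS.
by rewrite -mulr_sumr fh alt_sum !mulr0.
Qed.

Definition AA N : algC := (-1) ^+ N * w (rho ^+ N).
Definition XX c := \sum_(1 <= j < f.+1) AA (c + j * n).

Lemma iter_x c : it c (xx n p r lam sigma) = - be * XX c.
Proof.
rewrite /xx iter_sum.
transitivity (\sum_(1 <= j < f.+1) (be * (-1) ^+ (c + j * n) - be * AA (c + j * n))).
  by apply: eq_bigr => j _; rewrite -ssrnat.iterD iter_zz /AA; ring.
by rewrite sumrB -!mulr_sumr sign_sum mulr0 sub0r /XX mulNr.
Qed.


Lemma sgn2 N : (-1) ^+ N * (-1) ^+ N = 1 :> algC.
Proof. by rewrite -exprD addnn -mul2n exprM sqrrN !expr1n. Qed.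

Lemma f_gt0 : (0 < f)%N.
Proof. by have := MM_gt0; rewrite fh /MM; case: hh => //; rewrite muln0. Qed.

Lemma Aper N : AA (N + p.-1) = AA N.
Proof.
rewrite /AA exprD [in X in _ * X]exprD (prim_expr_order r_prim) mulr1.
by rewrite pM exprM sqrrN !expr1n mulr1.
Qed.

Definition BB M := \sum_(0 <= l < f) AA (M + l * n).

Lemma XB c : XX c = BB c.
Proof.
rewrite /XX (big_add1 _ _ 0 f.+1 xpredT) /=.
apply: (@shift1 (fun j => AA (c + j * n))); first exact: f_gt0.
by move=> j /=; rewrite mulnDl [(f * n)%N]mulnC -pf addnA Aper.
Qed.

Lemma BBper M j : BB (M + j * n) = BB M.
Proof.
rewrite /BB -(@shiftc (fun l => AA (M + l * n)) f j f_gt0).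
  by apply: eq_bigr => l _ /=; rewrite mulnDl addnA [(M + _ + _)%N]addnAC.
by move=> l /=; rewrite mulnDl [(f * n)%N]mulnC -pf addnA Aper.
Qed.

Lemma Tsum u v : \sum_(0 <= N < p.-1) AA (u + N) * AA (v + N)
  = (-1) ^+ (u + v) * ((rho ^+ u + rho ^+ v == 0)%:R * p%:R - 1).
Proof.
set s := rho ^+ u + rho ^+ v.
transitivity ((-1) ^+ (u + v) * \sum_(0 <= N < p.-1) w (rho ^+ N * s)).
  rewrite mulr_sumr; apply: eq_bigr => N _.
  rewrite /AA !exprD.
  transitivity ((-1) ^+ u * (-1) ^+ v * ((-1) ^+ N * (-1) ^+ N) *
     (w (rho ^+ u * rho ^+ N) * w (rho ^+ v * rho ^+ N))); first by ring.
  by rewrite sgn2 mulr1 -wD /s mulrDr [rho ^+ N * _]mulrC [rho ^+ N * rho ^+ v]mulrC.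
congr (_ * _).
rewrite big_mkord (@big_rho p p_pr _ r_prim _ _ _ (fun t => w (t * s))).
have := sum_w p p_pr s; rewrite (bigD1 0) //= mulr0 w0 => e.
apply: (addrI 1); rewrite [in RHS]addrC subrK.
under eq_bigr do rewrite mulrC.
by rewrite e; case: (s == 0); rewrite ?mul1r ?mul0r.
Qed.


Lemma hh_gt0 : (0 < hh)%N.
Proof. by have := MM_gt0; rewrite /MM; case: hh => //; rewrite muln0. Qed.

Lemma cond_nat a b l : (a < n)%N -> (b < n)%N -> (l < 2 * hh)%N ->
  (a == b + l * n + n * hh %[mod n * (2 * hh)])%N = (a == b) && (l == hh).
Proof.
move=> an bn lf.
have hp := hh_gt0.
have nh : (n <= hh * n)%N by rewrite leq_pmull.
have e2 : (n * (2 * hh) = 2 * (hh * n))%N by rewrite mulnCA [(n * hh)%N]mulnC.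
have e3 : (n * hh = hh * n)%N by rewrite mulnC.
rewrite e2 e3 [(a %% _)%N]modn_small; last by lia.
have [lh|hl] := ltnP l hh.
  have h1 : (l * n + n <= hh * n)%N by rewrite -mulSnr leq_mul2r lh orbT.
  rewrite modn_small; last by lia.
  rewrite (ltn_eqF lh) andbF; apply/negbTE; lia.
have h2 : (hh * n <= l * n)%N by rewrite leq_mul2r hl orbT.
have h3 : ((l - hh) * n = l * n - hh * n)%N by rewrite mulnBl.
have -> : (b + l * n + hh * n = (b + (l - hh) * n) + 2 * (hh * n))%N by lia.
rewrite modnDr modn_small; last first.
  have : ((l - hh) * n + n <= hh * n)%N.
    by rewrite -mulSnr leq_mul2r; apply/orP; right; lia.
  lia.
have [->|nl] := eqVneq l hh; first by rewrite subnn mul0n addn0 andbT.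
rewrite andbF; apply/negbTE.
have : (n <= (l - hh) * n)%N by rewrite leq_pmull // subn_gt0 ltn_neqAle eq_sym nl hl.
lia.
Qed.


Lemma cond_eq a b l : (a < n)%N -> (b < n)%N -> (l < f)%N ->
  (rho ^+ a + rho ^+ (b + l * n) == 0) = (a == b) && (l == hh).
Proof.
move=> an bn lf.
have e : - rho ^+ (b + l * n) = rho ^+ (b + l * n + MM) by rewrite [RHS]exprD rho_M mulrN1.
rewrite addr_eq0 e (eq_prim_root_expr r_prim) pf fh /MM.
by apply: cond_nat => //; rewrite -fh.
Qed.

Lemma core a b : (a < n)%N -> (b < n)%N ->
  \sum_(0 <= k < n) XX (a + k) * XX (b + k) = (a == b)%:R * ((-1) ^+ MM * p%:R).
Proof.
move=> an bn.
transitivity (\sum_(0 <= k < n) \sum_(0 <= j < f)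
   (fun N => AA (a + N) * BB (b + N)) (k + j * n)%N).
  apply: eq_bigr => k _; rewrite !XB {1}/BB mulr_suml; apply: eq_bigr => j _ /=.
  by rewrite !addnA BBper.
have := reidx (fun N => AA (a + N) * BB (b + N)) n f; rewrite /= => ->; rewrite -pf.
transitivity (\sum_(0 <= l < f) \sum_(0 <= N < p.-1) AA (a + N) * AA ((b + l * n) + N)).
  rewrite exchange_big /=; apply: eq_bigr => N _; rewrite /BB mulr_sumr.
  by apply: eq_bigr => l _; rewrite addnAC.
under eq_bigr => l _ do rewrite Tsum.
transitivity (\sum_(0 <= l < f) (((-1) ^+ (a + b) : algC) * (-1) ^+ (l * n) *
   ((rho ^+ a + rho ^+ (b + l * n) == 0)%:R * p%:R) - (-1) ^+ (a + b) * (-1) ^+ l)).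
  apply: eq_bigr => l _.
  rewrite addnA exprD -[(-1) ^+ l](signr_odd _ l) -[(-1) ^+ (l * n)]signr_odd oddM n_odd andbT.
  by rewrite mulrBr mulr1.
rewrite sumrB -mulr_sumr fh alt_sum mulr0 subr0 -fh.
rewrite big_mkord.
have [eab|nab] := eqVneq a b.
  subst b; have hf : (hh < f)%N by rewrite fh; have := hh_gt0; lia.
  rewrite (bigD1 (Ordinal hf)) //= cond_eq // !eqxx /= mul1r big1 ?addr0.
    by rewrite addnn -mul2n exprM sqrrN !expr1n !mul1r /MM mulnC.
  move=> l nl; rewrite cond_eq // eqxx /=.
  have -> : (nat_of_ord l == hh) = false.
    by apply/negbTE; apply: contra nl => /eqP e; apply/eqP; apply: val_inj.
  by rewrite mul0r mulr0.
rewrite big1 ?mul0r // => l _; rewrite cond_eq // (negbTE nab) /=.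
by rewrite mul0r mulr0.
Qed.


Lemma GG : let G := Gmat n p r lam sigma in G *m G^T = 1%:M /\ G^T *m G = 1%:M.
Proof.
move=> G.
have pn0 : (p%:R : algC) != 0 by rewrite pnatr_eq0 -lt0n prime_gt0.
have Gij : forall i j : 'I_n, G i j = - be * XX (i + j) / p%:R.
  by move=> i j; rewrite /G /Gmat mxE iter_x.
have key : G *m G^T = 1%:M.
  apply/matrixP => i j; rewrite !mxE.
  transitivity (be ^+ 2 / p%:R ^+ 2 * \sum_(0 <= k < n) XX (i + k) * XX (j + k)).
    rewrite big_mkord mulr_sumr; apply: eq_bigr => k _.
    rewrite (_ : G^T k j = G j k); last by rewrite mxE.
    rewrite !Gij -exprVn; ring.
  rewrite core // be2.
  have -> : (-1) ^+ MM * p%:R / p%:R ^+ 2 * ((i == j)%:R * ((-1) ^+ MM * p%:R)) =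
    (i == j)%:R * (((-1) ^+ MM * (-1) ^+ MM) * ((p%:R * p%:R) / p%:R ^+ 2)) :> algC by ring.
  by rewrite sgn2 mul1r -expr2 mulfV ?mulr1 // expf_neq0.
have GT : G^T = G by apply/matrixP => i j; rewrite !mxE addnC.
by split => //; rewrite GT -{2}GT.
Qed.

End Main.

Theorem theorem1 (n p : nat) (r lam : int) (sigma : {rmorphism algC -> algC}) :
  (1 < n)%N -> odd n -> prime p -> (p = 1 %[mod n])%N ->
  (p.-1).-primitive_root (r%:~R : 'F_p) ->
  (lam * (r - 1) = 1 %[mod p])%Z ->
  sigma (zeta p) = zeta p ^ r ->
  let G := Gmat n p r lam sigma in
  G *m G^T = 1%:M /\ G^T *m G = 1%:M.
Proof.
move=> h1 h2 h3 h4 h5 h6 h7.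
exact: (@GG n p r lam sigma h1 h2 h3 h4 h5 h6 h7).
Qed.
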